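(* Let $c>0$. The planar system $$\dot x=x(1-y+cx),\qquad \dot y=y(-1+x)$$ has no formal first integrals.
   Context: A formal first integral is a non-constant formal power series $f\in\mathbb{C}[[x,y]]$ with $x(1-y+cx)\partial_x f+y(-1+x)\partial_y f=0$. *)

(* Defs.v *)
From HB Require Import structures.
From mathcomp Require Import all_boot all_order all_algebra.
From mathcomp Require Import complex.
From mathcomp Require Import reals.
Set Implicit Arguments. Unset Strict Implicit. Unset Printing Implicit Defensive.
Import Order.TTheory GRing.Theory Num.Theory ComplexField.
Local Open Scope ring_scope.

(* A formal power series  f = sum_{i,j} f i j x^i y^j  in K[[x,y]],
   represented by its coefficient array. *)
Definition fps2 (K : Type) := nat -> nat -> K.

Section FPS2.
Variable K : comNzRingType.

Definition fps2_C (a : K) : fps2 K := fun i j => if (i == 0%N) && (j == 0%N) then a else 0.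
Definition fps2_X : fps2 K := fun i j => if (i == 1%N) && (j == 0%N) then 1 else 0.
Definition fps2_Y : fps2 K := fun i j => if (i == 0%N) && (j == 1%N) then 1 else 0.
Definition fps2_add (f g : fps2 K) : fps2 K := fun i j => f i j + g i j.
Definition fps2_opp (f : fps2 K) : fps2 K := fun i j => - f i j.
Definition fps2_mul (f g : fps2 K) : fps2 K := fun i j =>
  \sum_(k < i.+1) \sum_(l < j.+1) f k l * g (i - k)%N (j - l)%N.
Definition fps2_dx (f : fps2 K) : fps2 K := fun i j => (i.+1)%:R * f i.+1 j.
Definition fps2_dy (f : fps2 K) : fps2 K := fun i j => (j.+1)%:R * f i j.+1.

Definition fps2_nonconstant (f : fps2 K) : Prop :=
  exists i j, ((i, j) != (0%N, 0%N)) /\ f i j != 0.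
End FPS2.
Arguments fps2_X {K}.
Arguments fps2_Y {K}.

(* The vector field  x(1 - y + c x) d/dx + y(-1 + x) d/dy  applied to f. *)
Definition vf_apply (R : realType) (c : R) (f : fps2 R[i]) : fps2 R[i] :=
  fps2_add
    (fps2_mul (fps2_mul fps2_X
                 (fps2_add (fps2_add (fps2_C 1) (fps2_opp fps2_Y))
                           (fps2_mul (fps2_C (c%:C)%C) fps2_X)))
              (fps2_dx f))
    (fps2_mul (fps2_mul fps2_Y (fps2_add (fps2_C (-1)) fps2_X))
              (fps2_dy f)).

Definition formal_first_integral (R : realType) (c : R) (f : fps2 R[i]) : Prop :=
  fps2_nonconstant f /\ vf_apply c f = (fun _ _ => 0).

(* Main.v *)
Require Import Defs.
From HB Require Import structures.
From mathcomp Require Import all_boot all_order all_algebra.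
From mathcomp Require Import complex reals.
From mathcomp Require Import ring.
From Stdlib Require Import FunctionalExtensionality.
Import Order.TTheory GRing.Theory Num.Theory ComplexField.
Local Open Scope ring_scope.

Set Implicit Arguments. Unset Strict Implicit. Unset Printing Implicit Defensive.
Section M.
Variable K : comNzRingType.
Definition mono (a : K) (p q : nat) : fps2 K :=
  fun i j => if (i == p) && (j == q) then a else 0.

Lemma mul_mono_l a p q g i j :
  fps2_mul (mono a p q) g i j =
  if (p <= i)%N && (q <= j)%N then a * g (i - p)%N (j - q)%N else 0.
Proof.
rewrite /fps2_mul /mono.
case: ifP => [/andP[pi qj]|H].
  have pi' : (p < i.+1)%N by [].
  have qj' : (q < j.+1)%N by [].
  rewrite (bigD1 (Ordinal pi')) //= (bigD1 (Ordinal qj')) //= !eqxx /=.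
  rewrite [X in _ + X + _]big1 ?addr0; last first.
    move=> l /= hl.
    have -> : (nat_of_ord l == q) = false.
      by apply/negbTE; apply: contra hl => /eqP e; apply/eqP/val_inj.
    by rewrite mul0r.
  rewrite big1 ?addr0 //.
  move=> k /= hk.
  have -> : (nat_of_ord k == p) = false.
    by apply/negbTE; apply: contra hk => /eqP e; apply/eqP/val_inj.
  by rewrite big1 // => l _; rewrite mul0r.
rewrite big1 // => k _; rewrite big1 // => l _.
case: (boolP ((nat_of_ord k == p) && (nat_of_ord l == q))) => [/andP[/eqP ek /eqP el]|_]; last by rewrite mul0r.
exfalso; move: H; rewrite -ek -el.
by rewrite -ltnS ltn_ord -ltnS ltn_ord.
Qed.

Lemma fmul_addl (a b g : fps2 K) :
  fps2_mul (fps2_add a b) g = fps2_add (fps2_mul a g) (fps2_mul b g).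
Proof.
apply: functional_extensionality => i; apply: functional_extensionality => j.
rewrite /fps2_mul /fps2_add -big_split /=; apply: eq_bigr => k _.
by rewrite -big_split /=; apply: eq_bigr => l _; rewrite mulrDl.
Qed.
End M.

Section V.
Variable R : realType.
Variable c : R.
Implicit Types f : fps2 R[i].

Lemma XE : (@fps2_X R[i]) = mono 1 1 0. Proof. by []. Qed.
Lemma YE : (@fps2_Y R[i]) = mono 1 0 1. Proof. by []. Qed.
Lemma CE (a : R[i]) : fps2_C a = mono a 0 0. Proof. by []. Qed.

Lemma P1E : fps2_mul fps2_X
                 (fps2_add (fps2_add (fps2_C 1) (fps2_opp fps2_Y))
                           (fps2_mul (fps2_C (c%:C)%C) fps2_X))
  = fps2_add (fps2_add (mono 1 1 0) (mono (-1) 1 1)) (mono (c%:C)%C 2 0).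
Proof.
apply: functional_extensionality => i; apply: functional_extensionality => j.
rewrite !CE !XE YE !mul_mono_l /fps2_add /fps2_opp ?mul_mono_l /mono.
case: i => [|[|[|i]]]; case: j => [|[|j]] /=; rewrite ?subn0 ?subSS; 
  rewrite ?mulr0 ?mulr1 ?mul1r ?add0r ?addr0 ?oppr0 //.
all: try (by []). all: try (by rewrite addr0). all: try (by rewrite add0r).
all: try (by []). all: try (by rewrite addr0). all: try (by rewrite add0r). Qed.

Lemma P2E : fps2_mul fps2_Y (fps2_add (fps2_C (-1 : R[i])) fps2_X)
  = fps2_add (mono (-1) 0 1) (mono 1 1 1).
Proof.
apply: functional_extensionality => i; apply: functional_extensionality => j.
rewrite !CE !XE YE !mul_mono_l /fps2_add /fps2_opp ?mul_mono_l /mono.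
case: i => [|[|[|i]]]; case: j => [|[|j]] /=; rewrite ?subn0 ?subSS; 
  rewrite ?mulr0 ?mulr1 ?mul1r ?add0r ?addr0 ?oppr0 //.
all: try (by []). all: try (by rewrite addr0). all: try (by rewrite add0r).
Qed.
End V.


Unset Implicit Arguments.
Lemma vf_coef (R : realType) (c : R) (f : fps2 R[i]) i j :
  vf_apply c f i j =
  (i%:R - j%:R) * f i j
  + ((c%:C)%C * (i.-1)%:R + j%:R) * (if (1 <= i)%N then f i.-1 j else 0)
  - i%:R * (if (1 <= j)%N then f i j.-1 else 0).
Proof.
rewrite /vf_apply P1E P2E !fmul_addl /fps2_add !mul_mono_l /fps2_dx /fps2_dy.
case: i => [|[|i]]; case: j => [|j] /=; rewrite ?subSS ?subn0 ?subn1 /=;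
  rewrite ?mulr0 ?mul0r ?addr0 ?add0r ?subr0; try ring.
Qed.

Section Main.
Variable R : realType.
Variable c : R.
Hypothesis hc : 0 < c.
Variable f : fps2 R[i].
Hypothesis Hc : forall i j,
  (i%:R - j%:R) * f i j
  + ((c%:C)%C * (i.-1)%:R + j%:R) * (if (1 <= i)%N then f i.-1 j else 0)
  - i%:R * (if (1 <= j)%N then f i j.-1 else 0) = 0.

Lemma cC0 : (c%:C)%C != 0 :> R[i].
Proof. by rewrite eq_complex /= eqxx andbT gt_eqF. Qed.

Lemma offdiag n (IH : forall i j, (0 < i + j <= n)%N -> f i j = 0) i j :
  (i + j = n.+1)%N -> i != j -> f i j = 0.
Proof.
move=> hij nij.
have h := Hc i j.
have m0 : ((c%:C)%C * (i.-1)%:R + j%:R) * (if (1 <= i)%N then f i.-1 j else 0) = 0.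
  case: i hij h nij => [|i] hij h nij /=; first by rewrite mulr0.
  have [p0|] := posnP (i + j)%N.
    move: p0 => /eqP; rewrite addn_eq0 => /andP[/eqP -> /eqP ->].
    by rewrite mulr0 add0r mul0r.
  by move=> pos; rewrite IH ?mulr0 // pos /= -ltnS -hij addSn.
have m1 : i%:R * (if (1 <= j)%N then f i j.-1 else 0) = 0 :> R[i].
  case: j hij h nij m0 => [|j] hij h nij m0 /=; first by rewrite mulr0.
  have [p0|] := posnP (i + j)%N.
    move: p0 => /eqP; rewrite addn_eq0 => /andP[/eqP -> _].
    by rewrite mul0r.
  by move=> pos; rewrite IH ?mulr0 // pos /= -ltnS -hij addnS.
move: h; rewrite m0 m1 addr0 subr0 => /eqP; rewrite mulf_eq0 => /orP[|/eqP //].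
by rewrite subr_eq0 eqr_nat (negbTE nij).
Qed.

Lemma diag n (IH : forall i j, (0 < i + j <= n)%N -> f i j = 0) k :
  (k + k = n.+1)%N -> f k k = 0.
Proof.
move=> hk.
case: k hk => [|k] hk; first by [].
have z1 : f k.+2 k = 0.
  apply: (@offdiag n IH); first by rewrite addSn -hk addnS.
  by rewrite gtn_eqF // ltnW.
have z2 : f k k.+2 = 0.
  apply: (@offdiag n IH); first by rewrite addnS -hk addSn.
  by rewrite ltn_eqF // ltnW.
have E1 := Hc k.+2 k.+1.
have E2 := Hc k.+1 k.+2.
have E3 := Hc k.+2 k.+2.
rewrite /= z1 in E1.
rewrite /= z2 in E2.
rewrite /= in E3.
have hu : f k.+2 k.+1 = - (((c%:C)%C * k.+1%:R + k.+1%:R) * f k.+1 k.+1).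
  by rewrite -[LHS]subr0 -{1}E1; ring.
have hv : f k.+1 k.+2 = - (k.+1%:R * f k.+1 k.+1).
  by rewrite -[LHS]addr0 -{1}E2; ring.
have key : ((c%:C)%C * k.+1%:R) * f k.+1 k.+1 = 0.
  by rewrite -E3 hu hv; ring.
move/eqP: key; rewrite !mulf_eq0 (negbTE cC0) pnatr_eq0 /=.
by move/eqP.
Qed.

Lemma allzero n : forall i j, (0 < i + j <= n)%N -> f i j = 0.
Proof.
elim: n => [|n IH] i j.
  by case: (i + j)%N.
move=> /andP[pos]; rewrite leq_eqVlt => /orP[/eqP e|lt]; last first.
  by apply: IH; rewrite pos -ltnS.
case: (eqVneq i j) e => [<-|nij] e; last exact: (@offdiag n IH _ _ e nij).
exact: (@diag n IH _ e).
Qed.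
End Main.

Theorem proposition3p3 (R : realType) (c : R) (hc : 0 < c) :
  ~ exists f : fps2 R[i], formal_first_integral c f.
Proof.
case=> f [[i [j [nz fnz]]] H].
have Hc : forall i j,
  (i%:R - j%:R) * f i j
  + ((c%:C)%C * (i.-1)%:R + j%:R) * (if (1 <= i)%N then f i.-1 j else 0)
  - i%:R * (if (1 <= j)%N then f i j.-1 else 0) = 0.
  by move=> a b; rewrite -vf_coef H.
move/eqP: fnz; apply.
apply: (@allzero R c hc f Hc (i + j)%N).
rewrite leqnn andbT lt0n addn_eq0.
by move: nz; rewrite xpair_eqE.
Qed.
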